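(* Let $K$ be a field, $n\ge2$, and consider $K^n$ as a left module over the matrix algebra $M_n(K)$ via matrix–vector multiplication. Let $N$ be a $K$-subspace of $K^n$. Then: (i) if $N=K^n$, then $\sigma_\vartheta(N)=\tau_\vartheta(N)=K^n$ for all $\vartheta$; (ii) if $N=0$, then $\sigma_\vartheta(N)=\tau_\vartheta(N)=K^n$ when $\vartheta$ = left, and $\sigma_\vartheta(N)=\tau_\vartheta(N)=0$ when $\vartheta$ is right, pre-two-sided or two-sided; (iii) if $N$ is nonzero and proper, then $\sigma_\vartheta(N)=\tau_\vartheta(N)=0$ for all $\vartheta$.
   Context: For an associative unital algebra $\mathcal A$ over a field $K$, the symbol $\vartheta$ ranges over ''left'', ''right'', ''pre-two-sided'', ''two-sided''. A subspace $J\subseteq\mathcal A$ is a left (resp. right; two-sided) Mathieu subspace of $\mathcal A$ if whenever $a\in\mathcal A$ satisfies $a^m\in J$ for all $m\ge1$, then for all $b,c\in\mathcal A$ there is $N_0$ with $ba^m\in J$ (resp. $a^mc\in J$; $ba^mc\in J$) for all $m\ge N_0$; pre-two-sided means both left and right. A $\vartheta$-ideal means a left/right/two-sided ideal accordingly, and a two-sided ideal for $\vartheta$ = pre-two-sided. For a left $\mathcal A$-module $\mathcal M$, $u\in\mathcal M$, $N\subseteq \mathcal M$, $(N:u)=\{a\in\mathcal A: au\in N\}$; for a subspace $N$, $\sigma_\vartheta(N)=\{u\in\mathcal M: (N:u)\text{ is a }\vartheta\text{-ideal of }\mathcal A\}$, $\tau_\vartheta(N)=\{u\in\mathcal M: (N:u)\text{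 is a }\vartheta\text{-Mathieu subspace of }\mathcal A\}$. *)

(* Defs.v *)
From HB Require Import structures.
From mathcomp Require Import all_boot all_order all_algebra.
Set Implicit Arguments. Unset Strict Implicit. Unset Printing Implicit Defensive.
Import GRing.Theory.
Local Open Scope ring_scope.

Inductive theta := Left | Right | PreTwo | Two.

Section MatrixMathieu.
Variables (K : fieldType) (n : nat).
Notation A := 'M[K]_n.

Definition Ksubspace (J : A -> Prop) : Prop :=
  [/\ J 0, (forall a b, J a -> J b -> J (a + b)) & (forall (c : K) a, J a -> J (c *: a))].

Definition left_ideal (J : A -> Prop) : Prop :=
  Ksubspace J /\ forall b a, J a -> J (b * a).
Definition right_ideal (J : A -> Prop) : Prop :=
  Ksubspace J /\ forall a c, J a -> J (a * c).
Definition twosided_ideal (J : A -> Prop) : Prop :=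
  left_ideal J /\ right_ideal J.

Definition is_theta_ideal (th : theta) (J : A -> Prop) : Prop :=
  match th with
  | Left => left_ideal J
  | Right => right_ideal J
  | PreTwo | Two => twosided_ideal J
  end.

Definition powers_in (J : A -> Prop) (a : A) : Prop :=
  forall m : nat, (1 <= m)%N -> J (a ^+ m).

Definition left_Mathieu (J : A -> Prop) : Prop :=
  Ksubspace J /\ forall a, powers_in J a ->
    forall b, exists N0 : nat, forall m, (N0 <= m)%N -> J (b * a ^+ m).
Definition right_Mathieu (J : A -> Prop) : Prop :=
  Ksubspace J /\ forall a, powers_in J a ->
    forall c, exists N0 : nat, forall m, (N0 <= m)%N -> J (a ^+ m * c).
Definition twosided_Mathieu (J : A -> Prop) : Prop :=
  Ksubspace J /\ forall a, powers_in J a ->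
    forall b c, exists N0 : nat, forall m, (N0 <= m)%N -> J (b * a ^+ m * c).

Definition is_theta_Mathieu (th : theta) (J : A -> Prop) : Prop :=
  match th with
  | Left => left_Mathieu J
  | Right => right_Mathieu J
  | PreTwo => left_Mathieu J /\ right_Mathieu J
  | Two => twosided_Mathieu J
  end.

(* K^n as a left M_n(K)-module: column vectors, action a *m u. *)
Definition colon (N : {vspace 'cV[K]_n}) (u : 'cV[K]_n) : A -> Prop :=
  fun a => (a *m u) \in N.

Definition sigma (th : theta) (N : {vspace 'cV[K]_n}) (u : 'cV[K]_n) : Prop :=
  is_theta_ideal th (colon N u).
Definition tau (th : theta) (N : {vspace 'cV[K]_n}) (u : 'cV[K]_n) : Prop :=
  is_theta_Mathieu th (colon N u).

End MatrixMathieu.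

(* Main.v *)
Require Import Defs.
From HB Require Import structures.
From mathcomp Require Import all_boot all_order all_algebra.
Import GRing.Theory.
Local Open Scope ring_scope.

Section H.
Variables (K : fieldType) (n : nat).
Implicit Types (N : {vspace 'cV[K]_n}) (u y x : 'cV[K]_n).

Lemma ksub N u : Ksubspace (colon N u).
Proof.
split; rewrite /colon.
- by rewrite mul0mx mem0v.
- by move=> a b Ha Hb; rewrite mulmxDl rpredD.
- by move=> c a Ha; rewrite -scalemxAl rpredZ.
Qed.

Lemma all_true N u : (forall a, colon N u a) ->
  forall th, sigma th N u /\ tau th N u.
Proof.
move=> H.
have ks := ksub N u.
have LM : left_Mathieu (colon N u) by split=> // a _ b; exists 0%N => m _; apply: H.
have RM : right_Mathieu (colon N u) by split=> // a _ b; exists 0%N => m _; apply: H.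
have TM : twosided_Mathieu (colon N u) by split=> // a _ b c; exists 0%N => m _; apply: H.
have LI : left_ideal (colon N u) by split=> // *; apply: H.
have RI : right_ideal (colon N u) by split=> // *; apply: H.
by case; split => //; split.
Qed.

Lemma LI_LM (J : 'M[K]_n -> Prop) : left_ideal J -> left_Mathieu J.
Proof.
case=> ks H; split=> // a Ha b; exists 1%N => m Hm; apply: H; exact: Ha.
Qed.

Lemma RI_RM (J : 'M[K]_n -> Prop) : right_ideal J -> right_Mathieu J.
Proof.
case=> ks H; split=> // a Ha b; exists 1%N => m Hm; apply: H; exact: Ha.
Qed.

Lemma TM_LM (J : 'M[K]_n -> Prop) : twosided_Mathieu J -> left_Mathieu J.
Proof.
case=> ks H; split=> // a Ha b; have [N0 HN] := H a Ha b 1.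
by exists N0 => m Hm; have := HN m Hm; rewrite mulr1.
Qed.

Lemma TM_RM (J : 'M[K]_n -> Prop) : twosided_Mathieu J -> right_Mathieu J.
Proof.
case=> ks H; split=> // a Ha c; have [N0 HN] := H a Ha 1 c.
by exists N0 => m Hm; have := HN m Hm; rewrite mul1r.
Qed.

Lemma fail_right N u : (u != 0 -> ~ right_Mathieu (colon N u)) ->
  forall th, th <> Left -> (sigma th N u <-> u = 0) /\ (tau th N u <-> u = 0).
Proof.
move=> nR th hth.
have T0 : u = 0 -> forall a, colon N u a by move=> -> a; rewrite /colon mulmx0 mem0v.
have A : u = 0 -> forall th, sigma th N u /\ tau th N u := fun h => all_true _ _ (T0 h).
case: th hth => // _; (split; (split; [move=> H; apply/eqP; apply: contraT => nz; exfalso; apply: (nR nz) | by move=> /A HA; first [exact: (HA _).1 | exact: (HA _).2]])).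
- exact: RI_RM H.
- exact: H.
- exact: RI_RM H.2.
- exact: H.2.
- exact: RI_RM H.2.
- exact: TM_RM H.
Qed.

Lemma fail_left N u : (u != 0 -> ~ right_Mathieu (colon N u)) -> (u != 0 -> ~ left_Mathieu (colon N u)) ->
  forall th, (sigma th N u <-> u = 0) /\ (tau th N u <-> u = 0).
Proof.
move=> nR nL th.
have T0 : u = 0 -> forall a, colon N u a by move=> -> a; rewrite /colon mulmx0 mem0v.
case: th; [| by apply: fail_right..].
have A : u = 0 -> forall th, sigma th N u /\ tau th N u := fun h => all_true _ _ (T0 h).
split; split; [move=> H; apply/eqP; apply: contraT => nz; exfalso; apply: (nL nz) | by move=> /A HA; first [exact: (HA Left).1 | exact: (HA Left).2]
  | move=> H; apply/eqP; apply: contraT => nz; exfalso; apply: (nL nz) | by move=> /A HA; first [exact: (HA Left).1 | exact: (HA Left).2]].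
- exact: LI_LM H.
- exact: H.
Qed.

Lemma pow_idem (a : 'M[K]_n) : a * a = a -> forall m, a ^+ m.+1 = a.
Proof. by move=> H; elim=> [|m IH]; rewrite ?expr1 // exprS IH. Qed.

Lemma noRM N u (a c : 'M[K]_n) : a * a = a -> (a *m u) \in N ->
  ((a * c) *m u) \notin N -> ~ right_Mathieu (colon N u).
Proof.
move=> Hi Hu Hc [_ H].
have P : powers_in (colon N u) a by case=> // m _; rewrite /colon pow_idem.
have [N0 HN] := H a P c.
have := HN N0.+1 (leqnSn _); rewrite /colon pow_idem //; exact/negP.
Qed.

Lemma noLM N u (a b : 'M[K]_n) : a * a = a -> (a *m u) \in N ->
  ((b * a) *m u) \notin N -> ~ left_Mathieu (colon N u).
Proof.
move=> Hi Hu Hc [_ H].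
have P : powers_in (colon N u) a by case=> // m _; rewrite /colon pow_idem.
have [N0 HN] := H a P b.
have := HN N0.+1 (leqnSn _); rewrite /colon pow_idem //; exact/negP.
Qed.


Lemma nz_coord u : u != 0 -> exists i, u i 0 != 0.
Proof.
move=> nz; case: (pickP (fun i => u i 0 != 0)) => [i Hi|H]; first by exists i.
case/negP: nz; apply/eqP/matrixP => i j; rewrite ord1 mxE.
by move: (H i) => /negbFE/eqP.
Qed.

Lemma e_of u i : u i 0 != 0 -> exists e : 'rV[K]_n, e *m u = 1.
Proof.
move=> Hi; exists ((u i 0)^-1 *: delta_mx 0 i).
rewrite -scalemxAl -rowE; apply/matrixP => a b; rewrite !ord1 !mxE /= mulVf //.
Qed.

Lemma aux_mul (c : K) (A B : 'rV[K]_n) (v : 'cV[K]_n) :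
  (c *: (A - B)) *m v = c *: (A *m v - B *m v).
Proof. by rewrite -scalemxAl mulmxBl. Qed.

Lemma span_r u i y : u i 0 != 0 -> (forall l : K, y != l *: u) ->
  exists r : 'rV[K]_n, r *m u = 0 /\ r *m y = 1.
Proof.
move=> Hi Hy.
have [j Hj] : exists j, y j 0 != u j 0 / u i 0 * y i 0.
  case: (pickP (fun j => y j 0 != u j 0 / u i 0 * y i 0)) => [j Hj|H]; first by exists j.
  case/negP: (Hy (y i 0 / u i 0)); apply/eqP/matrixP => j k; rewrite ord1 !mxE.
  by move: (H j) => /= /negbFE /eqP E; rewrite E mulrAC [RHS]mulrC mulrA.
set d := y j 0 - u j 0 / u i 0 * y i 0.
have dn0 : d != 0 by rewrite subr_eq0.
exists (d^-1 *: (delta_mx 0 j - (u j 0 / u i 0) *: delta_mx 0 i)); split.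
- rewrite aux_mul -(scalemxAl (u j 0 / u i 0) (delta_mx 0 i) u) -!rowE.
  by apply/matrixP => a b; rewrite !ord1 !mxE /= divfK // subrr mulr0.
- rewrite aux_mul -(scalemxAl (u j 0 / u i 0) (delta_mx 0 i) y) -!rowE.
  by apply/matrixP => a b; rewrite !ord1 !mxE /= -/d mulVf.
Qed.


Lemma right_fail N u : u != 0 -> (exists y, y \notin N /\ forall l : K, y != l *: u) ->
  ~ right_Mathieu (colon N u).
Proof.
move=> nz [y [HyN Hy]].
have [i Hi] := nz_coord _ nz.
have [e He] := e_of _ _ Hi.
have [r [Hru Hry]] := span_r _ _ _ Hi Hy.
apply: (@noRM N u (y *m r) (y *m e)).
- by rewrite -mulmxE mulmxA -(mulmxA y r y) Hry mulmx1.
- by rewrite -mulmxA Hru mulmx0 mem0v.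
- by rewrite -mulmxE -!mulmxA He mulmx1 Hry mulmx1.
Qed.

Lemma left_fail_in N u y : u != 0 -> u \in N -> y \notin N -> ~ left_Mathieu (colon N u).
Proof.
move=> nz HuN HyN.
have [i Hi] := nz_coord _ nz.
have [e He] := e_of _ _ Hi.
apply: (@noLM N u 1 (y *m e)).
- by rewrite mulr1.
- by rewrite mul1mx.
- by rewrite mulr1 -mulmxA He mulmx1.
Qed.

Lemma left_fail_out N u x y : u != 0 -> x \in N -> (forall l : K, x != l *: u) ->
  y \notin N -> ~ left_Mathieu (colon N u).
Proof.
move=> nz HxN Hx HyN.
have [i Hi] := nz_coord _ nz.
have [e He] := e_of _ _ Hi.
have [r1 [Hr1u Hr1x]] := span_r _ _ _ Hi Hx.
set r := e + (1 - e *m x) *m r1.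
have Hru : r *m u = 1 by rewrite /r mulmxDl -mulmxA Hr1u mulmx0 addr0 He.
have Hrx : r *m x = 1 by rewrite /r mulmxDl -mulmxA Hr1x mulmx1 addrC subrK.
apply: (@noLM N u (x *m r) (y *m r)).
- by rewrite -mulmxE mulmxA -(mulmxA x r x) Hrx mulmx1.
- by rewrite -mulmxA Hru mulmx1.
- by rewrite -mulmxE -!mulmxA Hru mulmx1 Hrx mulmx1.
Qed.


Lemma notmult N u x : x \in N -> x != 0 -> u \notin N -> forall l : K, x != l *: u.
Proof.
move=> HxN nx HuN l; apply/eqP => E.
have l0 : l != 0 by apply: contraNneq nx => l0; rewrite E l0 scale0r.
case/negP: HuN; have -> : u = l^-1 *: x by rewrite E scalerA mulVf // scale1r.
exact: rpredZ.
Qed.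

Lemma main_sec (hn : (2 <= n)%N) (N : {vspace 'cV[K]_n}) :
  (N = fullv ->
     forall (th : theta) (u : 'cV[K]_n), sigma th N u /\ tau th N u) /\
  (N = 0%VS ->
     (forall u : 'cV[K]_n, sigma Left N u /\ tau Left N u) /\
     (forall th : theta, th <> Left ->
        forall u : 'cV[K]_n, (sigma th N u <-> u = 0) /\ (tau th N u <-> u = 0))) /\
  (N <> 0%VS -> N <> fullv ->
     forall (th : theta) (u : 'cV[K]_n),
       (sigma th N u <-> u = 0) /\ (tau th N u <-> u = 0)).
Proof.
split; first by move=> -> th u; apply: all_true => a; exact: memvf.
split.
  move=> N0; split.
    move=> u.
    have LI : left_ideal (colon N u).
      split; first exact: ksub.
      move=> b a; rewrite /colon N0 !memv0 => /eqP Ha.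
      by rewrite -mulmxE -mulmxA Ha mulmx0.
    by split; [exact: LI | exact: LI_LM].
  move=> th hth u; apply: fail_right => // nz.
  apply: right_fail => //.
  have [i Hi] := nz_coord _ nz.
  have H0 : (0 < n)%N by apply: leq_trans hn.
  have H1 : (1 < n)%N by [].
  pose j : 'I_n := if i == Ordinal H0 then Ordinal H1 else Ordinal H0.
  have ji : j != i.
    rewrite /j; case: ifP => [/eqP ->|/negbT]; first by [].
    by rewrite eq_sym.
  exists (delta_mx j 0); split.
    rewrite N0 memv0; apply/eqP => /matrixP /(_ j 0); rewrite !mxE !eqxx /=.
    by move/eqP; rewrite oner_eq0.
  move=> l; apply/eqP => /matrixP E.
  have Ei := E i 0; have Ej := E j 0; move: Ei Ej; rewrite !mxE !eqxx eq_sym (negbTE ji) /=.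
  move=> /esym /eqP; rewrite mulf_eq0 (negbTE Hi) orbF => /eqP ->.
  by rewrite mul0r => /eqP; rewrite oner_eq0.
move=> Nn0 Nnf th u.
have [x [HxN nx]] : exists x, x \in N /\ x != 0.
  by exists (vpick N); split; [exact: memv_pick | rewrite vpick0; apply/eqP].
have [y0 Hy0] : exists y, y \notin N.
  have : ~~ (fullv <= N)%VS.
    apply/negP => H; apply: Nnf; apply/eqP; by rewrite eqEsubv H subvf.
  by case/subvPn => y _ Hy; exists y.
apply: fail_left => nz.
  apply: right_fail => //.
  have [HuN|HuN] := boolP (u \in N).
    exists y0; split => // l; apply: contraNneq Hy0 => ->; exact: rpredZ.
  exists (u + x); split.
    apply: contra HuN => H; have -> : u = (u + x) - x by rewrite addrK.
    exact: rpredB.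
  move=> l; apply/eqP => E.
  have := notmult _ _ _ HxN nx HuN (l - 1); rewrite scalerBl scale1r -E addrC addKr.
  by rewrite eqxx.
have [HuN|HuN] := boolP (u \in N).
  exact: left_fail_in _ _ _ nz HuN Hy0.
exact: left_fail_out _ _ _ _ nz HxN (notmult _ _ _ HxN nx HuN) Hy0.
Qed.

End H.

Theorem proposition5p1 (K : fieldType) (n : nat) (hn : (2 <= n)%N)
    (N : {vspace 'cV[K]_n}) :
  (* (i) *)
  (N = fullv ->
     forall (th : theta) (u : 'cV[K]_n), sigma th N u /\ tau th N u) /\
  (* (ii) *)
  (N = 0%VS ->
     (forall u : 'cV[K]_n, sigma Left N u /\ tau Left N u) /\
     (forall th : theta, th <> Left ->
        forall u : 'cV[K]_n, (sigma th N u <-> u = 0) /\ (tau th N u <-> u = 0))) /\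
  (* (iii) *)
  (N <> 0%VS -> N <> fullv ->
     forall (th : theta) (u : 'cV[K]_n),
       (sigma th N u <-> u = 0) /\ (tau th N u <-> u = 0)).
Proof. exact: main_sec. Qed.
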